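(* Let $A_1,\dots,A_p\in M_m$, let $\langle\mathcal{S}\rangle_0$ (resp. $\langle\mathcal{S}\rangle_1$) be the unital (resp. not necessarily unital) subalgebra of $M_m$ generated by $A_1,\dots,A_p$, and let $\tau(X)=\sum_{i=1}^pA_i^*XA_i$ on $M_m$. Let $(a_n)_{n\ge0}$ be strictly positive scalars such that $\sum_{n\ge0}a_n\tau^n$ converges in norm. Then for $j=0,1$ there exists a natural number $N_j\le m^2$ such that the coefficient space of $\sum_{n=j}^{N_j}a_n\tau^n$ equals $\langle\mathcal{S}\rangle_j$, and the Choi rank of $\sum_{n=j}^{N_j}a_n\tau^n$ equals $\dim\langle\mathcal{S}\rangle_j$.
   Context: $\tau^0$ is the identity map. For a completely positive map $\sigma$ on $M_m$ with Choi-Kraus decomposition $\sigma(X)=\sum_kC_k^*XC_k$, the coefficient space of $\sigma$ is $\mathrm{span}\{C_k\}$ (independent of the decomposition) and its dimension is the Choi rank of $\sigma$. *)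

(* Defs.v *)
From HB Require Import structures.
From mathcomp Require Import all_boot all_order all_algebra.
From mathcomp Require Import all_classical all_reals all_analysis.
From mathcomp Require Import complex.

Set Implicit Arguments.
Unset Strict Implicit.
Unset Printing Implicit Defensive.

Import Order.TTheory GRing.Theory Num.Theory.
Import numFieldNormedType.Exports.
Local Open Scope ring_scope.

Definition adjmx (R : rcfType) (m : nat) (A : 'M[R[i]]_m) : 'M[R[i]]_m :=
  \matrix_(i, j) (A j i)^*.

Definition tau_map (R : rcfType) (m p : nat) (A : 'I_p -> 'M[R[i]]_m)
  (X : 'M[R[i]]_m) : 'M[R[i]]_m :=
  \sum_(k < p) adjmx (A k) *m X *m A k.

Definition kraus_decomp (R : rcfType) (m : nat)
  (sigma : 'M[R[i]]_m -> 'M[R[i]]_m) (Cs : seq 'M[R[i]]_m) : Prop :=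
  forall X, sigma X = \sum_(C <- Cs) adjmx C *m X *m C.

Definition is_coef_space (R : rcfType) (m : nat)
  (sigma : 'M[R[i]]_m -> 'M[R[i]]_m) (V : {vspace 'M[R[i]]_m}) : Prop :=
  (exists Cs, kraus_decomp sigma Cs) /\
  (forall Cs, kraus_decomp sigma Cs -> <<Cs>>%VS = V).

Definition choi_matrix (R : rcfType) (m : nat)
  (sigma : 'M[R[i]]_m -> 'M[R[i]]_m) :=
  \mxblock_(i < m, j < m) (sigma (delta_mx i j)).

Definition choi_rank (R : rcfType) (m : nat)
  (sigma : 'M[R[i]]_m -> 'M[R[i]]_m) : nat :=
  \rank (choi_matrix sigma).

Definition subalg_closed (R : rcfType) (m p : nat) (j : nat)
  (A : 'I_p -> 'M[R[i]]_m) (W : {vspace 'M[R[i]]_m}) : Prop :=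
  (forall k, A k \in W) /\
  (j = 0%N -> (1%:M : 'M[R[i]]_m) \in W) /\
  (forall X Y, X \in W -> Y \in W -> X *m Y \in W).

Definition is_generated_subalg (R : rcfType) (m p : nat) (j : nat)
  (A : 'I_p -> 'M[R[i]]_m) (V : {vspace 'M[R[i]]_m}) : Prop :=
  subalg_closed j A V /\
  (forall W, subalg_closed j A W -> (V <= W)%VS).

Definition partial_sum (R : rcfType) (m p : nat) (A : 'I_p -> 'M[R[i]]_m)
  (a : nat -> R) (j N : nat) (X : 'M[R[i]]_m) : 'M[R[i]]_m :=
  \sum_(j <= n < N.+1) ((a n)%:C)%C *: iter n (tau_map A) X.

(* Main.v *)
Require Import Defs.
From HB Require Import structures.
From mathcomp Require Import all_boot all_order all_algebra.
From mathcomp Require Import all_classical all_reals all_analysis.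
From mathcomp Require Import complex.
From mathcomp Require Import ring zify.
Set Implicit Arguments.
Unset Strict Implicit.
Unset Printing Implicit Defensive.
Import Order.TTheory GRing.Theory Num.Theory.
Local Open Scope ring_scope.
Import VectorInternalTheory.
Import numFieldNormedType.Exports.

Section A.
Variables (R : rcfType) (m p : nat) (A : 'I_p -> 'M[R[i]]_m).
Local Notation M := 'M[R[i]]_m.

Lemma adjmxM (X Y : M) : adjmx (X *m Y) = adjmx Y *m adjmx X.
Proof.
apply/matrixP => i j; rewrite !mxE rmorph_sum; apply: eq_bigr => k _.
by rewrite !mxE rmorphM mulrC.
Qed.

Lemma adjmx1 : adjmx (1%:M : M) = 1%:M.
Proof. by apply/matrixP => i j; rewrite !mxE rmorph_nat eq_sym. Qed.

Lemma adjmxZ c (X : M) : adjmx (c *: X) = c^* *: adjmx X.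
Proof. by apply/matrixP => i j; rewrite !mxE rmorphM. Qed.

Fixpoint Kw (n : nat) : seq M :=
  if n is n'.+1 then [seq W *m A k | W <- Kw n', k <- index_enum 'I_p]
  else [:: 1%:M].

Lemma iter_tau n X : iter n (tau_map A) X = \sum_(C <- Kw n) adjmx C *m X *m C.
Proof.
elim: n => [|n IH]; first by rewrite /= big_seq1 adjmx1 mul1mx mulmx1.
rewrite iterS IH /= big_allpairs_dep /tau_map exchange_big /=.
apply: eq_bigr => k _; rewrite mulmx_sumr mulmx_suml; apply: eq_bigr => W _.
by rewrite !adjmxM !mulmxA.
Qed.

Lemma adj_delta_entry (C : M) a b c d :
  (adjmx C *m delta_mx a b *m C) c d = (C a c)^* * C b d.
Proof.
rewrite -(mul_delta_mx (ord0 : 'I_1)) mulmxA -colE -mulmxA -rowE.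
by rewrite !mxE big_ord1 !mxE.
Qed.

Lemma kraus_sub (sigma : M -> M) (Cs Ds : seq M) :
  kraus_decomp sigma Cs -> kraus_decomp sigma Ds -> (<<Cs>> <= <<Ds>>)%VS.
Proof.
move=> hC hD; apply/span_subvP => C0 C0in.
set U := <<Ds>>%VS.
apply/negPn/negP => C0U.
pose g : 'End(M) := (\1 - projv U)%VF.
have gE Z : g Z = Z - projv U Z by rewrite /g !lfunE /= !lfunE.
have gC0 : g C0 != 0.
  by rewrite gE subr_eq0; apply: contra C0U => /eqP ->; apply: memv_proj.
have [r [s rs]] : exists r s, g C0 r s != 0.
  case: (pickP (fun rs : 'I_m * 'I_m => g C0 rs.1 rs.2 != 0)) => [[r s] H|H].
    by exists r, s.
  exfalso; move/eqP: gC0; apply; apply/matrixP => r s; rewrite mxE.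
  by move: (H (r, s)) => /negbFE/eqP.
pose phi Z := g Z r s.
pose y b d := phi (delta_mx b d).
have phiE Z : phi Z = \sum_b \sum_d Z b d * y b d.
  rewrite /phi {1}(matrix_sum_delta Z) linear_sum summxE; apply: eq_bigr => b _.
  rewrite linear_sum summxE; apply: eq_bigr => d _.
  by rewrite linearZ mxE.
pose Q := \sum_b \sum_d \sum_a \sum_c
           (y b d * (y a c)^*) * sigma (delta_mx a b) c d.
have key (Es : seq M) : kraus_decomp sigma Es ->
    \sum_(E <- Es) phi E * (phi E)^* = Q.
  move=> hE.
  have sE a b c d : sigma (delta_mx a b) c d = \sum_(E <- Es) (E a c)^* * E b d.
    by rewrite hE summxE; apply: eq_bigr => E _; rewrite adj_delta_entry.
  have ex E : phi E * (phi E)^* = \sum_b \sum_d \sum_a \sum_c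
        (y b d * (y a c)^*) * ((E a c)^* * E b d).
    rewrite phiE rmorph_sum mulr_suml; apply: eq_bigr => b _.
    rewrite mulr_suml; apply: eq_bigr => d _.
    rewrite mulr_sumr; apply: eq_bigr => a _.
    rewrite rmorph_sum mulr_sumr; apply: eq_bigr => c _.
    by rewrite rmorphM; ring.
  rewrite (eq_bigr _ (fun E _ => ex E)) /Q.
  rewrite exchange_big; apply: eq_bigr => b _.
  rewrite exchange_big; apply: eq_bigr => d _.
  rewrite exchange_big; apply: eq_bigr => a _.
  rewrite exchange_big; apply: eq_bigr => c _.
  by rewrite sE mulr_sumr.
have QD : Q = 0.
  rewrite -(key _ hD) big_seq big1 // => D DD.
  have -> : phi D = 0 by rewrite /phi gE projv_id ?subrr ?mxE ?memv_span.
  by rewrite mul0r.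
move: (key _ hC); rewrite QD => /eqP; rewrite psumr_eq0; last first.
  by move=> E _; apply: mul_conjC_ge0.
move/allP/(_ C0 C0in); rewrite mul_conjC_eq0 /phi.
by rewrite (negPf rs).
Qed.

Lemma WWstar0 n s (W : 'M[R[i]]_(n, s)) : W *m (map_mx Num.conj W)^T = 0 -> W = 0.
Proof.
move=> h; apply/matrixP => i k; move: (congr1 (fun X : 'M[R[i]]_n => X i i) h).
rewrite !mxE => /eqP; rewrite psumr_eq0; last by move=> x _; rewrite !mxE mul_conjC_ge0.
move/allP/(_ k (mem_index_enum _)); rewrite /= ?mxE mul_conjC_eq0 => /eqP ->.
by rewrite ?mxE.
Qed.

Lemma rank_GcG n s (G : 'M[R[i]]_(s, n)) :
  \rank ((map_mx Num.conj G)^T *m G) = \rank G.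
Proof.
set Gc := (map_mx Num.conj G)^T.
have rGc : \rank Gc = \rank G by rewrite mxrank_tr mxrank_map.
apply/eqP; rewrite eqn_leq mxrankM_maxr /=.
have sK : (kermx (Gc *m G) <= kermx Gc)%MS.
  rewrite sub_kermx; apply/eqP/WWstar0.
  rewrite map_mxM trmx_mul /Gc -map_trmx trmxK.
  have -> : map_mx Num.conj (map_mx Num.conj G) = G.
    by apply/matrixP => i j; rewrite !mxE conjCK.
  rewrite !mulmxA -[kermx _ *m _ *m _]mulmxA. 
  by rewrite mulmx_ker mul0mx.
move: (mxrankS sK); rewrite !mxrank_ker -rGc.
move: (rank_leq_row (Gc *m G)) (rank_leq_row Gc).
move=> h1 h2 h3.
lia.
Qed.

Local Notation N := (\sum_(i < m) m)%N.
Definition flat (C : M) : 'rV[R[i]]_N :=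
  \row_idx C (@tagnat.sig1 m (fun _ => m) idx) (@tagnat.sig2 m (fun _ => m) idx).
Definition unflat (r : 'rV[R[i]]_N) : M :=
  \matrix_(i, c) r 0 (@tagnat.Rank m (fun _ => m) i c).

Lemma flatK : cancel flat unflat.
Proof.
move=> C; apply/matrixP => i c; rewrite !mxE.
have e1 := @tagnat.Rank1K m (fun _ => m) i c.
have e2 : @tagnat.sig2 m (fun _ => m) (@tagnat.Rank m (fun _ => m) i c) = c.
  by apply: val_inj; rewrite tagnat.Rank2K.
by rewrite e2 e1.
Qed.

Fact flat_lin : linear flat.
Proof. by move=> c X Y; apply/rowP => idx; rewrite !mxE. Qed.
HB.instance Definition _ := GRing.isLinear.Build _ _ _ _ flat flat_lin.
Fact unflat_lin : linear unflat.
Proof. by move=> c X Y; apply/matrixP => i j; rewrite !mxE. Qed.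
HB.instance Definition _ := GRing.isLinear.Build _ _ _ _ unflat unflat_lin.

Lemma choi_rank_span (sigma : M -> M) (Cs : seq M) :
  kraus_decomp sigma Cs -> choi_rank sigma = \dim <<Cs>>%VS.
Proof.
move=> hC.
pose T := in_tuple Cs.
pose G := \matrix_(k < size Cs) flat (tnth T k).
have choiE : choi_matrix sigma = (map_mx Num.conj G)^T *m G.
  apply/matrixP => x y; rewrite /choi_matrix /mxblock !mxE hC summxE big_tnth.
  by apply: eq_bigr => k _; rewrite adj_delta_entry !mxE.
rewrite /choi_rank choiE rank_GcG.
have -> : \dim <<Cs>>%VS = \rank (b2mx T) by rewrite unlock /dimv genmxE.
have e1 : G = b2mx T *m lin1_mx (flat \o r2v).
  apply/row_matrixP => k; rewrite row_mul !rowK mul_rV_lin1 /=.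
  by rewrite v2rK.
have e2 : b2mx T = G *m lin1_mx (v2r \o unflat).
  apply/row_matrixP => k; rewrite row_mul !rowK mul_rV_lin1 /=.
  by rewrite flatK.
apply/eqP; rewrite eqn_leq; apply/andP; split.
  by rewrite {1}e1 mxrankM_maxl.
by rewrite {1}e2 mxrankM_maxl.
Qed.

Lemma span_lin (f : {linear M -> M}) (X : seq M) (U : {vspace M}) :
  (forall x, x \in X -> f x \in U) -> forall v, v \in <<X>>%VS -> f v \in U.
Proof.
move=> H v vX; rewrite (coord_span (X := in_tuple X) vX) linear_sum.
apply: memv_suml => i _; rewrite linearZ; apply: memvZ; apply: H.
by apply: mem_nth.
Qed.

Variable (a : nat -> R).
Hypothesis apos : forall n, 0 < a n.

Definition sq k : R[i] := ((Num.sqrt (a k))%:C)%C.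
Definition Cs j N := flatten [seq [seq sq k *: C | C <- Kw k] | k <- index_iota j N.+1].
Definition Ws j N := flatten [seq Kw k | k <- index_iota j N.+1].

Lemma kraus_ps j N : kraus_decomp (partial_sum A a j N) (Cs j N).
Proof.
move=> X; rewrite /partial_sum /Cs big_flatten big_map /=.
apply: eq_bigr => k _; rewrite iter_tau scaler_sumr big_map; apply: eq_bigr => C _.
rewrite adjmxZ -scalemxAl -scalemxAl -scalemxAr scalerA.
congr (_ *: _).
have hr : sq k \is Num.real by rewrite /sq complex_real.
rewrite conj_Creal // /sq -rmorphM -expr2 sqr_sqrtr //.
exact: ltW.
Qed.

Lemma sq_neq0 k : sq k != 0.
Proof. by rewrite /sq fmorph_eq0 sqrtr_eq0 -ltNge apos. Qed.

Lemma memWs j N x : (x \in Ws j N) = has (fun k => x \in Kw k) (index_iota j N.+1).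
Proof.
apply/flatten_mapP/hasP => [[k kin xin]|[k kin xin]]; by exists k.
Qed.

Lemma span_Cs j N : <<Cs j N>>%VS = <<Ws j N>>%VS.
Proof.
apply/subv_anti/andP; split; apply/span_subvP => x.
  move/flatten_mapP => [k kin /mapP [C Cin ->]].
  apply: memvZ; apply: memv_span; apply/flatten_mapP; by exists k.
move/flatten_mapP => [k kin xin].
have -> : x = (sq k)^-1 *: (sq k *: x) by rewrite scalerA mulVf ?sq_neq0 ?scale1r.
apply: memvZ; apply: memv_span; apply/flatten_mapP; exists k => //.
by apply/mapP; exists x.
Qed.

Lemma Ws_mono j n : (<<Ws j n>> <= <<Ws j n.+1>>)%VS.
Proof.
apply: sub_span => x /flatten_mapP [k kin xin]; apply/flatten_mapP; exists k => //.
move: kin; rewrite !mem_index_iota => /andP [-> /= h]; exact: ltnW.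
Qed.

Lemma dim_grow j n : (forall k, (k < n)%N -> <<Ws j k>>%VS != <<Ws j k.+1>>%VS) ->
  (n <= \dim <<Ws j n>>%VS)%N.
Proof.
elim: n => [|n IH] h //.
have h1 := IH (fun k hk => h k (ltnW hk)).
have h2 : (\dim <<Ws j n>>%VS < \dim <<Ws j n.+1>>%VS)%N.
  by rewrite (ltn_leqif (dimv_leqif_eq (Ws_mono j n))) h.
exact: leq_ltn_trans h1 h2.
Qed.

Lemma exists_stable j : exists2 N, (N <= m ^ 2)%N & <<Ws j N>>%VS = <<Ws j N.+1>>%VS.
Proof.
case: (boolP [exists k : 'I_(m ^ 2).+1, <<Ws j k>>%VS == <<Ws j k.+1>>%VS]).
  by move=> /existsP [k /eqP hk]; exists k => //; rewrite -ltnS ltn_ord.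
move=> hno; exfalso.
have h := @dim_grow j (m ^ 2).+1.
have : ((m ^ 2).+1 <= \dim <<Ws j (m ^ 2).+1>>%VS)%N.
  apply: h => k hk; apply/negP => /eqP e; move/negP: hno; apply.
  by apply/existsP; exists (Ordinal hk); apply/eqP.
have : (\dim <<Ws j (m ^ 2).+1>>%VS <= m ^ 2)%N.
  by rewrite (leq_trans (dimvS (subvf _))) // dimvf dim_matrix -mulnn.
move=> h3 h4; have := leq_trans h4 h3; by rewrite ltnn.
Qed.

Lemma KinV j (V : {vspace M}) : (j <= 1)%N -> Defs.subalg_closed j A V ->
  forall k, (j <= k)%N -> forall C, C \in Kw k -> C \in V.
Proof.
move=> hj [hA [h1 hM]]; elim => [|k IH] hk C.
  by move: hk; rewrite leqn0 => /eqP hj0; rewrite inE => /eqP ->; apply: h1.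
move/allpairsP => [[W i] [/= Win _ ->]].
case: (leqP j k) => hjk.
  by apply: hM; [apply: IH | apply: hA].
have k0 : k = 0%N by lia.
move: Win; rewrite k0 inE => /eqP ->; rewrite mul1mx; apply: hA.
Qed.

Lemma stable_closed j N : (j <= 1)%N -> <<Ws j N>>%VS = <<Ws j N.+1>>%VS ->
  Defs.subalg_closed j A <<Ws j N>>%VS.
Proof.
move=> hj hN.
have mulA X i : X \in <<Ws j N>>%VS -> X *m A i \in <<Ws j N>>%VS.
  move=> XW; apply: (span_lin (f := mulmxr (A i))) XW => x /flatten_mapP [k kin xin].
  rewrite hN; apply: memv_span; apply/flatten_mapP; exists k.+1.
    move: kin; rewrite !mem_index_iota => /andP [h1 h2]; apply/andP; split => //.
    exact: leq_trans h1 (leqnSn k).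
  by apply/allpairsP; exists (x, i); rewrite mem_index_enum.
have mulK X k C : C \in Kw k -> X \in <<Ws j N>>%VS -> X *m C \in <<Ws j N>>%VS.
  elim: k C => [|k IH] C; first by rewrite inE => /eqP -> XW; rewrite mulmx1.
  move/allpairsP => [[W i] [/= Win _ ->]] XW.
  by rewrite mulmxA; apply: mulA; apply: IH.
split.
  move=> i; rewrite hN; apply: memv_span; apply/flatten_mapP; exists 1%N.
    by rewrite mem_index_iota hj.
  by apply/allpairsP; exists (1%:M, i); rewrite mem_index_enum mem_head mul1mx.
split.
  move=> j0; apply: memv_span; apply/flatten_mapP; exists 0%N.
    by rewrite mem_index_iota j0.
  exact: mem_head.
move=> X Y XW YW.
apply: (span_lin (f := mulmx X)) YW => x /flatten_mapP [k kin xin].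
exact: mulK xin XW.
Qed.
End A.

Theorem theorem5p5 (R : realType) (m p : nat) (A : 'I_p -> 'M[R[i]]_m)
  (a : nat -> R) :
  (forall n, 0 < a n) ->
  (* norm convergence of \sum_n a_n tau^n, i.e. (finite dimension)
     entrywise convergence of the real and imaginary parts of
     \sum_n a_n tau^n(X) for every X *)
  (forall (X : 'M[R[i]]_m) (r s : 'I_m),
      cvgn (series (fun n => a n * complex.Re (iter n (tau_map A) X r s))) /\
      cvgn (series (fun n => a n * complex.Im (iter n (tau_map A) X r s)))) ->
  forall (j : nat), (j <= 1)%N ->
  forall V : {vspace 'M[R[i]]_m}, is_generated_subalg j A V ->
  exists N : nat, (N <= m ^ 2)%N /\
    is_coef_space (partial_sum A a j N) V /\
    choi_rank (partial_sum A a j N) = \dim V.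
Proof.
move=> apos _ j hj V [Vcl Vmin].
have [N hNle hN] := exists_stable A j.
have VW : V = <<Ws A j N>>%VS.
  apply/subv_anti/andP; split.
    by apply: Vmin; apply: stable_closed.
  apply/span_subvP => x /flatten_mapP [k kin xin].
  move: kin; rewrite mem_index_iota => /andP [hk _].
  exact: (KinV hj Vcl hk xin).
have hK := kraus_ps A apos j N.
exists N; split => //; split.
  split; first by exists (Cs A a j N).
  move=> Ds hD; rewrite VW -(span_Cs A apos j N).
  by apply/subv_anti/andP; split; apply: kraus_sub; eauto.
by rewrite (choi_rank_span hK) (span_Cs A apos j N) VW.
Qed.
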